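(* Let $G=(V,E)$ be a finite simple graph, let $A$ be a nonzero commutative ring with unity, let $R=A[V]$, and let $S\subseteq V$. Then $$\mathcal{N}_S(G)=\bigcap_{D}(D)R=\bigcap_{D\ \mathrm{minimal}}(D)R,$$ where the first intersection is over all $S$-TD-sets $D$ of $G$ and the second over all minimal $S$-TD-sets of $G$. Moreover, the second decomposition is irredundant.
   Context: For $v\in V$, $N(v)=\{u\in V: uv\in E\}$, and for $D\subseteq V$, $N(D)=\bigcup_{v\in D}N(v)$. For $U\subseteq V$, $X_U=\prod_{v\in U}v\in A[V]$. The $S$-open neighborhood ideal is $\mathcal{N}_S(G)=(X_{N(v)}\mid v\in S)R$. A set $D\subseteq V$ is an $S$-TD-set of $G$ if $N(D)\supseteq S$; it is minimal if no proper subset of $D$ is an $S$-TD-set. $(D)R$ is the ideal generated by the variables in $D$. *)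

(* Defs.v *)
From HB Require Import structures.
From mathcomp Require Import all_boot all_algebra.
From mathcomp Require Export mpoly.
Set Implicit Arguments. Unset Strict Implicit. Unset Printing Implicit Defensive.
Import GRing.Theory.
Local Open Scope ring_scope.

Definition simple_graph (n : nat) (e : rel 'I_n) : Prop :=
  ssrbool.symmetric e /\ irreflexive e.

Definition nbhd (n : nat) (e : rel 'I_n) (v : 'I_n) : {set 'I_n} :=
  [set u | e u v].
Definition nbhdS (n : nat) (e : rel 'I_n) (D : {set 'I_n}) : {set 'I_n} :=
  \bigcup_(v in D) nbhd e v.

Definition XU (A : comNzRingType) (n : nat) (U : {set 'I_n}) : {mpoly A[n]} :=
  \prod_(v in U) 'X_v.

(* Ideals are represented as predicates on the ring.  The ideal generated
   by the finite family (f i)_{i in P}:  x = sum_{i in P} c_i f_i. *)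
Definition gen_ideal (R : comNzRingType) (I : finType) (P : pred I) (f : I -> R)
  : R -> Prop :=
  fun x => exists c : I -> R, x = \sum_(i | P i) c i * f i.

Definition nbhd_ideal (A : comNzRingType) (n : nat) (e : rel 'I_n)
  (S : {set 'I_n}) : {mpoly A[n]} -> Prop :=
  gen_ideal (mem S) (fun v => XU A (nbhd e v)).

Definition var_ideal (A : comNzRingType) (n : nat) (D : {set 'I_n})
  : {mpoly A[n]} -> Prop :=
  gen_ideal (mem D) (fun v => 'X_v).

Definition STD (n : nat) (e : rel 'I_n) (S D : {set 'I_n}) : bool :=
  S \subset nbhdS e D.
Definition minSTD (n : nat) (e : rel 'I_n) (S D : {set 'I_n}) : bool :=
  STD e S D && [forall D' : {set 'I_n}, (D' \proper D) ==> ~~ STD e S D'].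

Definition ideal_eq (R : Type) (I J : R -> Prop) : Prop := forall x, I x <-> J x.

Arguments XU A {n} U.
Arguments nbhd_ideal A {n} e S _.
Arguments var_ideal A {n} D _.

(* Main.v *)
Require Import Defs.
From mathcomp Require Import all_boot all_algebra.
From mathcomp Require Import mpoly.
Local Open Scope ring_scope.
Import GRing.Theory.

Section GenIdeal.
Variables (R : comNzRingType) (I : finType) (P : pred I) (f : I -> R).

Lemma gi0 : gen_ideal P f 0.
Proof. by exists (fun _ => 0); rewrite big1 // => i _; rewrite mul0r. Qed.

Lemma giD x y : gen_ideal P f x -> gen_ideal P f y -> gen_ideal P f (x + y).
Proof.
move=> [c1 ->] [c2 ->]; exists (fun i => c1 i + c2 i).
by rewrite -big_split /=; apply: eq_bigr => i _; rewrite mulrDl.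
Qed.

Lemma giM r x : gen_ideal P f x -> gen_ideal P f (r * x).
Proof.
move=> [c ->]; exists (fun i => r * c i).
by rewrite mulr_sumr; apply: eq_bigr => i _; rewrite mulrA.
Qed.

Lemma gi_gen i : P i -> gen_ideal P f (f i).
Proof.
move=> Pi; exists (fun j => if j == i then 1 else 0).
rewrite (bigD1 i) //= eqxx mul1r big1 ?addr0 // => j /andP [_ /negbTE ->].
by rewrite mul0r.
Qed.

End GenIdeal.

Lemma gi_sub (R : comNzRingType) (I : finType) (P : pred I) (f : I -> R) (J : finType) (Q : pred J) (g : J -> R) x :
  (forall i, P i -> gen_ideal Q g (f i)) -> gen_ideal P f x -> gen_ideal Q g x.
Proof.
move=> H [c ->]; apply: (big_ind (gen_ideal Q g)); first exact: gi0.
  by move=> ? ?; apply: giD.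
by move=> i Pi; apply: giM; apply: H.
Qed.

Section Mono.
Variables (A : comNzRingType) (n : nat).

Lemma coefX0 (p : {mpoly A[n]}) (i : 'I_n) (mm : 'X_{1..n}) :
  mm i = 0%N -> (p * 'X_i)@_mm = 0.
Proof.
move=> H; apply/eqP; rewrite mcoeff_eq0; apply/negP => Hm.
have := perm_mem (msuppMX p U_(i)%MM) mm; rewrite Hm => /esym /mapP [m' _ E].
by move: H; rewrite E mnmDE mnm1E eqxx.
Qed.

Lemma XU_split (U : {set 'I_n}) u : u \in U ->
  XU A U = 'X_u * XU A (U :\ u).
Proof. by move=> uU; rewrite /XU (big_setD1 u uU). Qed.

Lemma coefXU0 (p : {mpoly A[n]}) (U : {set 'I_n}) u (mm : 'X_{1..n}) :
  u \in U -> mm u = 0%N -> (p * XU A U)@_mm = 0.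
Proof.
move=> uU H; rewrite (XU_split _ _ uU) mulrCA mulrC; exact: coefX0.
Qed.

Lemma var_ideal_coef (D : {set 'I_n}) (x : {mpoly A[n]}) (mm : 'X_{1..n}) :
  var_ideal A D x -> (forall i, i \in D -> mm i = 0%N) -> x@_mm = 0.
Proof.
move=> [c ->] H; rewrite raddf_sum; apply: big1 => i iD.
exact: coefX0 (H _ iD).
Qed.

Lemma XU_mem_var (U D : {set 'I_n}) u : u \in U -> u \in D ->
  var_ideal A D (XU A U).
Proof.
move=> uU uD; rewrite (XU_split _ _ uU) mulrC; apply: giM; by apply: gi_gen.
Qed.

Lemma X_mono (U : {set 'I_n}) (m : 'X_{1..n}) :
  (forall u, u \in U -> (0 < m u)%N) ->
  exists r, 'X_[m] = r * XU A U :> {mpoly A[n]}.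
Proof.
move=> H; rewrite mpolyXE_id (bigID (mem U)) /=.
rewrite (eq_bigr (fun i => 'X_i ^+ (m i).-1 * 'X_i)); last first.
  by move=> i iU; rewrite -exprSr prednK // H.
rewrite big_split /=.
exists ((\prod_(i | i \in U) 'X_i ^+ (m i).-1) *
        \prod_(i | i \notin U) 'X_i ^+ m i).
by rewrite /XU mulrAC.
Qed.

End Mono.

Theorem theorem2p6 (A : comNzRingType) (n : nat) (e : rel 'I_n)
  (S : {set 'I_n}) :
  simple_graph e ->
  (* N_S(G) = intersection of (D)R over all S-TD-sets D *)
  ideal_eq (nbhd_ideal A e S)
    (fun x => forall D : {set 'I_n}, STD e S D -> var_ideal A D x) /\
  (* N_S(G) = intersection of (D)R over all minimal S-TD-sets D *)
  ideal_eq (nbhd_ideal A e S)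
    (fun x => forall D : {set 'I_n}, minSTD e S D -> var_ideal A D x) /\
  (* irredundance: omitting any minimal S-TD-set changes the intersection *)
  (forall D0 : {set 'I_n}, minSTD e S D0 ->
     ~ ideal_eq (nbhd_ideal A e S)
         (fun x => forall D : {set 'I_n}, minSTD e S D -> D != D0 ->
                     var_ideal A D x)).
Proof.
move=> [esym _].
have nbS : forall D v, STD e S D -> v \in S -> exists2 u, u \in D & u \in nbhd e v.
  move=> D v /subsetP sub vS; have /bigcupP [u uD] := sub v vS.
  by rewrite !inE => evu; exists u => //; rewrite inE esym.
have P1 : ideal_eq (nbhd_ideal A e S)
    (fun x => forall D : {set 'I_n}, STD e S D -> var_ideal A D x).
  move=> x; split.
    move=> Hx D HD; apply: gi_sub Hx => v vS.
    have [u uD uN] := nbS D v HD vS; exact: XU_mem_var uN uD.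
  move=> H; rewrite (mpolyE x) big_seq; apply: big_ind.
  - exact: gi0.
  - by move=> ? ?; apply: giD.
  move=> m mx; rewrite -mul_mpolyC; apply: giM.
  case: (boolP [exists v in S, [forall u in nbhd e v, 0 < m u]%N]).
    move=> /exists_inP [v vS /forall_inP Hv].
    have [r ->] := @X_mono A n _ _ Hv; apply: giM; by apply: gi_gen.
  move=> Hn; exfalso.
  have HD : STD e S [set u | m u == 0%N].
    apply/subsetP => v vS.
    move/existsPn: Hn => /(_ v); rewrite vS /= => /forall_inPn [u uN].
    rewrite lt0n negbK => mu0; apply/bigcupP; exists u; first by rewrite inE.
    by move: uN; rewrite !inE esym.
  have := @var_ideal_coef A n _ _ m (H _ HD).
  move: mx; rewrite mcoeff_msupp => /eqP mx0 Hc; apply: mx0; apply: Hc.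
  by move=> i; rewrite inE => /eqP.
split; first exact: P1.
split.
  move=> x; split.
    by move=> Hx D /andP [HD _]; apply: (proj1 (P1 x)).
  move=> H; apply: (proj2 (P1 x)) => D HD.
  have [D' /minsetP [HD' minD'] sub] := minset_exists HD.
  have : minSTD e S D'.
    apply/andP; split => //; apply/forallP => B; apply/implyP.
    rewrite properE => /andP [BD' nD'B]; apply/negP => SB.
    by move: nD'B; rewrite (minD' B SB BD') subxx.
  move=> /H; apply: gi_sub => i iD'; apply: gi_gen; exact: (subsetP sub).
move=> D0 HD0 Heq.
pose mm : 'X_{1..n} := [multinom (i \notin D0 : nat) | i < n].
have XE : XU A (~: D0) = 'X_[mm].
  rewrite mpolyXE_id /XU big_mkcond /=; apply: eq_bigr => i _.
  by rewrite mnmE in_setC; case: (i \in D0) => /=; rewrite ?expr0 ?expr1.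
have : nbhd_ideal A e S (XU A (~: D0)).
  apply/Heq => D HD nD.
  case: (boolP (D \subset D0)) => sub.
    move: HD0 => /andP [_ /forallP /(_ D)]; rewrite properEneq nD sub /=.
    by move: HD => /andP [-> _].
  have [u uD uD0] := subsetPn sub.
  by apply: (@XU_mem_var A n _ _ u); rewrite // in_setC.
move=> [c Hc]; move: (congr1 (mcoeff mm) Hc).
rewrite XE mcoeffX eqxx raddf_sum big1; first by move/eqP; rewrite oner_eq0.
move=> v vS; move: HD0 => /andP [HD0 _].
have [u uD uN] := nbS D0 v HD0 vS.
by apply: (@coefXU0 A n _ _ u) => //; rewrite mnmE uD.
Qed.
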